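(* Let $f_d(\mathbf{x})=\psi_{3d}(\sqrt d\,\langle\mathbf{x}^{(1)},\mathbf{x}^{(2)}\rangle)$. There are absolute constants $C_1,C_2$ such that for all $d\ge2$ and $K\in\mathbb{N}$ there is a depth-3 ReLU network $f_{d,K}$ with hidden widths at most $\omega_{d,K}:=\max(6d+2,2Kd)$ such that $\|f_d-f_{d,K}\|_{L^\infty}\le C_1\frac{d^{5/2}}{K}$ and $R_3(f_{d,K};\omega_{d,K})\le C_2d^{5/2}$.
   Context: $\mathcal{X}_d=\mathbb{S}^{d-1}\times\mathbb{S}^{d-1}\subset\mathbb{R}^{2d}$; $\mathbf{x}^{(1)},\mathbf{x}^{(2)}$ are the first and last $d$ coordinates; $\|\cdot\|_{L^\infty}$ is the sup norm over $\mathcal{X}_d$. The sawtooth $\psi_n(t)=-2n[t+1]_++2n[t-1]_++4n\sum_{j=1}^n\big((-1)^{j+n+1}[t-\tfrac{2j-1}{2n}]_++(-1)^{j+n}[t+\tfrac{2j-1}{2n}]_+\big)$. A depth-3 network is $f_\phi(\mathbf{x})=\mathbf{w}_3^\top[\mathbf{W}_2[\mathbf{W}_1\mathbf{x}+\mathbf{b}_1]_++\mathbf{b}_2]_++b_3$; $R_3(f;\omega)=\inf\{\|\phi\|^2/3: f_\phi=f\text{ on }\mathcal{X}_d,\ \text{hidden widths}\le\omega\}$ with $\|\phi\|^2$ the sum of squares of all weights and biases. *)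

(* Defs.v *)
From HB Require Import structures.
From mathcomp Require Import all_boot all_order all_algebra.
From mathcomp Require Import all_classical all_reals.
From mathcomp Require Import ereal.

Set Implicit Arguments. Unset Strict Implicit. Unset Printing Implicit Defensive.
Import Order.TTheory GRing.Theory Num.Theory.
Local Open Scope ring_scope.
Local Open Scope classical_set_scope.

Section Defs.
Variable R : realType.

Definition relu (t : R) : R := Num.max t 0.

Definition psi (n : nat) (t : R) : R :=
  - (2 * n%:R) * relu (t + 1) + (2 * n%:R) * relu (t - 1)
  + (4 * n%:R) * \sum_(1 <= j < n.+1)
      ((-1) ^+ (j + n + 1) * relu (t - (2 * j - 1)%:R / (2 * n)%:R)
       + (-1) ^+ (j + n) * relu (t + (2 * j - 1)%:R / (2 * n)%:R)).

Definition x1 (d : nat) (x : 'cV[R]_(d + d)) : 'cV[R]_d := usubmx x.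
Definition x2 (d : nat) (x : 'cV[R]_(d + d)) : 'cV[R]_d := dsubmx x.

Definition dotv (d : nat) (u v : 'cV[R]_d) : R := \sum_(i < d) u i 0 * v i 0.

Definition on_sphere (d : nat) (u : 'cV[R]_d) : Prop := Num.sqrt (dotv u u) = 1.

Definition Xd (d : nat) : set 'cV[R]_(d + d) :=
  [set x | on_sphere (x1 x) /\ on_sphere (x2 x)].

Definition Linf_norm (d : nat) (g : 'cV[R]_(d + d) -> R) : \bar R :=
  ereal_sup [set (`|g x|)%:E | x in @Xd d].

Definition f_target (d : nat) (x : 'cV[R]_(d + d)) : R :=
  psi (3 * d) (Num.sqrt d%:R * dotv (x1 x) (x2 x)).

Record params (d m1 m2 : nat) := Params {
  W1 : 'M[R]_(m1, d + d);
  b1 : 'cV[R]_m1;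
  W2 : 'M[R]_(m2, m1);
  b2 : 'cV[R]_m2;
  w3 : 'cV[R]_m2;
  b3 : R }.

Definition reluv (m : nat) (v : 'cV[R]_m) : 'cV[R]_m := map_mx relu v.

Definition net (d m1 m2 : nat) (p : params d m1 m2) (x : 'cV[R]_(d + d)) : R :=
  ((w3 p)^T *m reluv (W2 p *m reluv (W1 p *m x + b1 p) + b2 p)) 0 0 + b3 p.

Definition sqsum (m n : nat) (A : 'M[R]_(m, n)) : R :=
  \sum_(i < m) \sum_(j < n) A i j ^+ 2.

Definition pnorm2 (d m1 m2 : nat) (p : params d m1 m2) : R :=
  sqsum (W1 p) + sqsum (b1 p) + sqsum (W2 p) + sqsum (b2 p) + sqsum (w3 p)
  + b3 p ^+ 2.

Definition R3 (d : nat) (f : 'cV[R]_(d + d) -> R) (omega : nat) : \bar R :=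
  ereal_inf [set r | exists (m1 m2 : nat) (p : params d m1 m2),
    [/\ (m1 <= omega)%N, (m2 <= omega)%N,
        (forall x, @Xd d x -> net p x = f x) &
        r = (pnorm2 p / 3)%:E]].

End Defs.

(* Main.v *)
Require Import Defs.
From HB Require Import structures.
From mathcomp Require Import all_boot all_order all_algebra.
From mathcomp Require Import all_classical all_reals.
From mathcomp Require Import ereal.
From mathcomp Require Import ring lra zify.

Import Order.TTheory GRing.Theory Num.Theory.
Local Open Scope ring_scope.

Section Aux.
Variable R : realType.
Implicit Types t u a A : R.

Lemma relu_cases (x : R) : (0 <= x /\ relu x = x) \/ (x <= 0 /\ relu x = 0).
Proof.
rewrite /relu /Order.max; case: ifP => h.
  by right; split => //; exact: ltW.
by left; split => //; rewrite leNgt h.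
Qed.

Lemma relu_scale (c x : R) : 0 <= c -> relu (c * x) = c * relu x.
Proof.
move=> c0; case: (relu_cases x) => [[x0 ->]|[x0 ->]].
  by case: (relu_cases (c * x)) => [[_ ->]//|[h ->]]; nra.
by case: (relu_cases (c * x)) => [[h ->]|[_ ->]]; nra.
Qed.

Definition phi a t : R := relu (t + a) - relu (t - a).

Ltac rc x := case: (relu_cases x) => [[? ->]|[? ->]].

Lemma phi_mono {a t u} : 0 <= a -> t <= u -> 0 <= phi a u - phi a t <= u - t.
Proof.
move=> a0 tu; rewrite /phi.
rc (u + a); rc (u - a); rc (t + a); rc (t - a); apply/andP; split; lra.
Qed.

Lemma relu_incr {t u b c} : t <= u -> b <= c ->
  relu (u + b) - relu (t + b) <= relu (u + c) - relu (t + c).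
Proof.
move=> tu bc; rc (u + b); rc (t + b); rc (u + c); rc (t + c); lra.
Qed.

Lemma phi_le {a A t u} : 0 <= a -> a <= A -> t <= u ->
  phi a u - phi a t <= phi A u - phi A t.
Proof.
move=> a0 aA tu; rewrite /phi.
have h1 := relu_incr tu aA.
have h2 : relu (u - A) - relu (t - A) <= relu (u - a) - relu (t - a).
  by apply: relu_incr => //; lra.
lra.
Qed.


Definition aj (n j : nat) : R := (2 * j - 1)%:R / (2 * n)%:R.
Definition T (n m : nat) t : R :=
  \sum_(1 <= j < m.+1) (-1) ^+ (j + m) * phi (aj n j) t.

Lemma aj_ge0 n j : 0 <= aj n j.
Proof. by rewrite /aj divr_ge0 // ler0n. Qed.

Lemma aj_mono n j : aj n j <= aj n j.+1.
Proof.
rewrite /aj ler_wpM2r ?invr_ge0 ?ler0n // ler_nat; lia.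
Qed.

Lemma aj_le1 n : aj n n <= 1.
Proof.
rewrite /aj; case: n => [|n]; first by rewrite muln0 /= mul0r ler01.
rewrite ler_pdivrMr ?ltr0n ?muln_gt0 // mul1r ler_nat; lia.
Qed.

Lemma sign_double (k : nat) : (-1) ^+ (k + k) = 1 :> R.
Proof. by rewrite exprD -exprMn mulrNN mulr1 expr1n. Qed.

Lemma T_step n m t : T n m.+1 t = phi (aj n m.+1) t - T n m t.
Proof.
rewrite /T big_nat_recr //= sign_double mul1r addrC; congr (_ + _).
rewrite -sumrN; apply: eq_bigr => j _.
by rewrite addnS exprS mulN1r mulNr.
Qed.

Lemma T_bound n m {t u} : t <= u ->
  0 <= T n m u - T n m t <= phi (aj n m) u - phi (aj n m) t.
Proof.
move=> tu; elim: m => [|m IH].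
  rewrite /T !big_geq // subrr lexx /=.
  by case/andP: (phi_mono (aj_ge0 n 0) tu).
rewrite !T_step.
have h1 := phi_le (aj_ge0 n m) (aj_mono n m) tu.
case/andP: IH => i1 i2.
apply/andP; split; lra.
Qed.

Lemma psi_phi n t : psi n t = - (2 * n%:R) * phi 1 t + 4 * n%:R * T n n t.
Proof.
rewrite /psi /phi /T.
have -> : \sum_(1 <= j < n.+1)
      ((-1) ^+ (j + n + 1) * relu (t - (2 * j - 1)%:R / (2 * n)%:R)
       + (-1) ^+ (j + n) * relu (t + (2 * j - 1)%:R / (2 * n)%:R))
   = \sum_(1 <= j < n.+1) (-1) ^+ (j + n) * phi (aj n j) t.
  apply: eq_bigr => j _; rewrite /phi /aj addn1 exprS; ring.
rewrite /phi; ring.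
Qed.

Lemma psi_lip n t u : `|psi n u - psi n t| <= 2 * n%:R * `|u - t|.
Proof.
wlog tu : t u / t <= u.
  move=> H; case/orP: (le_total t u) => h; first exact: H.
  by have := H u t h; rewrite distrC (distrC t).
rewrite !psi_phi (ger0_norm (x := u - t)) ?subr_ge0 //.
have h1 := T_bound n n tu.
have h2 := phi_le (aj_ge0 n n) (aj_le1 n) tu.
have h3 := phi_mono (@ler01 R) tu.
have hn : 0 <= n%:R :> R by rewrite ler0n.
case/andP: h1 => h1 h1'; case/andP: h3 => h3 h3'.
rewrite ler_norml; apply/andP; split; nra.
Qed.

Definition cj (h : R) (j : nat) : R := (j%:R + 2^-1) * h.
Definition G (K : nat) (h t : R) : R := \sum_(j < K) 2 * h * relu (t - cj h j).

Lemma G_spec K {h : R} : 0 < h ->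
  (forall t, (K%:R - 2^-1) * h <= t -> G K h t = 2 * K%:R * h * t - K%:R ^+ 2 * h ^+ 2)
  /\ (forall t, 0 <= t <= (K%:R + 2^-1) * h -> `|t ^+ 2 - G K h t| <= h ^+ 2 / 4).
Proof.
move=> h0; elim: K => [|K [IH1 IH2]].
  rewrite /G; split => t; rewrite big_ord0.
    by move=> _; ring.
  move=> /andP [t0 th]; rewrite ?subr0 ?mul0r ?add0r in th *.
  rewrite ger0_norm ?sqr_ge0 //; nra.
have GS t : G K.+1 h t = G K h t + 2 * h * relu (t - cj h K).
  by rewrite /G big_ord_recr.
have KS : K.+1%:R = K%:R + 1 :> R by rewrite mulrSr.
have E1 : forall t, (K%:R + 1 - 2^-1) * h <= t ->
    G K.+1 h t = 2 * (K%:R + 1) * h * t - (K%:R + 1) ^+ 2 * h ^+ 2.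
  move=> t ht; rewrite GS IH1; last by nra.
  case: (relu_cases (t - cj h K)) => [[hh ->]|[hh ->]]; rewrite /cj in hh *; nra.
rewrite KS; split => // t /andP [t0 th].
case: (lerP t ((K%:R + 2^-1) * h)) => tK.
  rewrite GS; case: (relu_cases (t - cj h K)) => [[hh ->]|[_ ->]].
    have -> : t - cj h K = 0 by rewrite /cj in hh *; lra.
    by rewrite mulr0 addr0; apply: IH2; nra.
  by rewrite mulr0 addr0; apply: IH2; nra.
rewrite E1; last by lra.
have -> : t ^+ 2 - (2 * (K%:R + 1) * h * t - (K%:R + 1) ^+ 2 * h ^+ 2)
   = (t - (K%:R + 1) * h) ^+ 2 by ring.
rewrite ger0_norm ?sqr_ge0 //; nra.
Qed.

Definition gp (K : nat) (h t : R) : R :=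
  \sum_(j < K) (relu (t - cj h j) + relu (- t - cj h j)).

Lemma gp_G K (h : R) t : 0 < h -> 0 <= t -> 2 * h * gp K h t = G K h t.
Proof.
move=> h0 t0; rewrite /gp /G mulr_sumr; apply: eq_bigr => j _.
have c0 : 0 <= cj h j by rewrite /cj mulr_ge0 ?ltW // addr_ge0 ?ler0n ?invr_ge0 ?ler0n.
case: (relu_cases (- t - cj h j)) => [[hh ->]|[_ ->]]; last by rewrite addr0.
have -> : - t - cj h j = 0 by lra.
by rewrite addr0.
Qed.

Lemma gpN K (h : R) t : gp K h (- t) = gp K h t.
Proof. by rewrite /gp; apply: eq_bigr => j _; rewrite opprK addrC. Qed.

Lemma sq_err K (h : R) t : 0 < h -> `|t| <= (K%:R + 2^-1) * h ->
  `|t ^+ 2 - 2 * h * gp K h t| <= h ^+ 2 / 4.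
Proof.
move=> h0; wlog t0 : t / 0 <= t.
  move=> H; case/orP: (le_total 0 t) => ht; first exact: H.
  move=> tb; rewrite -gpN -sqrrN; apply: H; first by rewrite oppr_ge0.
  by rewrite normrN.
rewrite ger0_norm // => tb; rewrite gp_G //.
by case: (G_spec K h0) => _ H; apply: H; rewrite t0 tb.
Qed.

End Aux.
Arguments phi {R}. Arguments aj {R}. Arguments T {R}. Arguments cj {R}.
Arguments G {R}. Arguments gp {R}.


Section Net.
Variable R : realType.

Lemma sum_mul_nat (F : nat -> R) a b :
  \sum_(0 <= m < (a * b)%N) F m = \sum_(0 <= x < a) \sum_(0 <= y < b) F (x * b + y)%N.
Proof.
elim: a => [|a IH]; first by rewrite mul0n !big_geq.
rewrite mulSnr big_nat_recr //= -IH (big_cat_nat _ (n := a * b)) ?leq_addr //=.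
congr (_ + _).
rewrite (big_addn 0 (a * b + b) (a * b)) addKn.
by apply: eq_bigr => y _; rewrite addnC.
Qed.

Lemma sum_mul (F : nat -> R) a b :
  \sum_(m < (a * b)%N) F m = \sum_(x < a) \sum_(y < b) F (x * b + y)%N.
Proof.
rewrite -(big_mkord xpredT) sum_mul_nat -(big_mkord xpredT (fun x => \sum_(y < b) F (x * b + y)%N)); apply: eq_bigr => x _.
by rewrite -(big_mkord xpredT (fun y => F (x * b + y)%N)).
Qed.


Lemma big2 (F : nat -> R) : \sum_(y < 2) F y = F 0%N + F 1%N.
Proof. by rewrite big_ord_recr big_ord1. Qed.

Definition ck (n k : nat) : R :=
  if (k < n * 2)%N then
    (if (k %% 2 == 0)%N then 4 * n%:R * (-1) ^+ ((k %/ 2).+1 + n + 1)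
     else 4 * n%:R * (-1) ^+ ((k %/ 2).+1 + n))
  else if (k == n * 2)%N then - (2 * n%:R) else 2 * n%:R.

Definition qk (n k : nat) : R :=
  if (k < n * 2)%N then
    (if (k %% 2 == 0)%N then aj n (k %/ 2).+1 else - aj n (k %/ 2).+1)
  else if (k == n * 2)%N then -1 else 1.

Lemma psi_sum n N s : N = (n * 2 + 2)%N ->
  \sum_(k < N) ck n k * relu (s - qk n k) = psi n s.
Proof.
move=> ->.
rewrite -(big_mkord xpredT (fun k => ck n k * relu (s - qk n k))).
rewrite addn2 !big_nat_recr //= big_mkord.
rewrite (sum_mul (fun k => ck n k * relu (s - qk n k)) n 2).
have E1 : ck n (n * 2) = - (2 * n%:R) by rewrite /ck ltnn eqxx.
have E2 : qk n (n * 2) = - 1 by rewrite /qk ltnn eqxx.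
have E3 : ck n (n * 2).+1 = 2 * n%:R.
  by rewrite /ck ltnNge leqnSn /= (gtn_eqF (ltnSn _)).
have E4 : qk n (n * 2).+1 = 1.
  by rewrite /qk ltnNge leqnSn /= (gtn_eqF (ltnSn _)).
rewrite E1 E2 E3 E4 opprK.
have -> : \sum_(x < n) \sum_(y < 2) ck n (x * 2 + y) * relu (s - qk n (x * 2 + y))
  = 4 * n%:R * \sum_(x < n) ((-1) ^+ (x.+1 + n + 1) * relu (s - aj n x.+1)
       + (-1) ^+ (x.+1 + n) * relu (s + aj n x.+1)).
  rewrite mulr_sumr; apply: eq_bigr => x _.
  rewrite (big2 (fun y => ck n (x * 2 + y) * relu (s - qk n (x * 2 + y)))) /=.
  have xn := ltn_ord x.
  have h1 : (x * 2 + 0 < n * 2)%N by lia.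
  have h2 : (x * 2 + 1 < n * 2)%N by lia.
  have h3 : ((x * 2 + 0) %% 2 = 0)%N by lia.
  have h4 : ((x * 2 + 1) %% 2 = 1)%N by lia.
  have h5 : ((x * 2 + 0) %/ 2 = x)%N by lia.
  have h6 : ((x * 2 + 1) %/ 2 = x)%N by lia.
  rewrite /ck /qk h1 h2 h3 h4 h5 h6 /= opprK; ring.
rewrite /psi big_add1 /= big_mkord /aj; ring.
Qed.


Lemma eqle (a b : R) : a = b -> a <= b.
Proof. by move->. Qed.

Lemma sqsum_le m n (A : 'M[R]_(m, n)) c :
  (forall i j, A i j ^+ 2 <= c) -> sqsum A <= (m * n)%:R * c.
Proof.
move=> H; rewrite /sqsum.
apply: (@le_trans _ _ (\sum_(i < m) \sum_(j < n) c)).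
  by apply: ler_sum => i _; apply: ler_sum => j _; exact: H.
by rewrite sumr_const card_ord sumr_const card_ord -mulrnA mulnC mulr_natl.
Qed.

Lemma aj_le1' {n j} : (j <= n)%N -> aj n j <= 1 :> R.
Proof.
rewrite /aj; case: n => [|n] jn.
  have -> : j = 0%N by lia.
  by rewrite muln0 /= mul0r ler01.
rewrite ler_pdivrMr ?ltr0n ?muln_gt0 // mul1r ler_nat; lia.
Qed.

Lemma qk_bound n k : `|qk n k| <= 1.
Proof.
rewrite /qk; case: ifP => h.
  have hj : ((k %/ 2).+1 <= n)%N by lia.
  have h1 := aj_le1' hj; have h0 := @aj_ge0 R n (k %/ 2).+1.
  by case: ifP => _; rewrite ?normrN ger0_norm.
by case: ifP => _; rewrite ?normrN normr1.
Qed.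

Lemma ck_bound n k : `|ck n k| <= 4 * n%:R.
Proof.
have n0 : 0 <= n%:R :> R by rewrite ler0n.
rewrite /ck; case: ifP => h.
  by case: ifP => _; rewrite normrM normr_sign mulr1 ger0_norm // mulr_ge0.
case: ifP => _; rewrite ?normrN ger0_norm ?mulr_ge0 //; lra.
Qed.


Lemma dotv_ge0 {n} (u : 'cV[R]_n) : 0 <= dotv u u.
Proof. by rewrite /dotv sumr_ge0 // => i _; rewrite -expr2 sqr_ge0. Qed.

Lemma sphere1 {n} {u : 'cV[R]_n} : on_sphere u -> dotv u u = 1.
Proof. by move=> H; rewrite -(sqr_sqrtr (dotv_ge0 u)) H expr1n. Qed.

Lemma coord_le {n} {u : 'cV[R]_n} i : dotv u u = 1 -> u i 0 ^+ 2 <= 1.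
Proof.
move=> <-; rewrite /dotv (bigD1 i) //= expr2 lerDl sumr_ge0 // => j _.
by rewrite -expr2 sqr_ge0.
Qed.

Lemma sq_le1 (a : R) : a ^+ 2 <= 1 -> -1 <= a <= 1.
Proof.
move=> h; have h1 := sqr_ge0 (a - 1); have h2 := sqr_ge0 (a + 1).
apply/andP; split; nra.
Qed.

Section Construction.
Variables d K : nat.
Hypothesis d0 : (0 < d)%N.
Hypothesis K0 : (0 < K)%N.

Definition hh : R := 2 / K%:R.
Definition rd : R := Num.sqrt d%:R.
Definition al : R := Num.sqrt rd.
Definition be : R := Num.sqrt (d%:R / K%:R).
Definition wv : R := al * rd * hh / be.
Definition nn : nat := (3 * d)%N.

Definition sg (a : nat) : R := if (a %% 2 == 0)%N then 1 else -1.

Definition Amat : 'M[R]_(2 * K * d, d) :=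
  \matrix_(m, k) (be * sg (m %/ d)%N * ((k : nat) == (m %% d)%N)%:R).
Definition W1m : 'M[R]_(2 * K * d, d + d) := row_mx Amat Amat.
Definition b1v : 'cV[R]_(2 * K * d) := \col_m (- (be * cj hh (m %/ d %/ 2)%N)).
Definition W2m : 'M[R]_(6 * d + 2, 2 * K * d) := const_mx wv.
Definition b2v : 'cV[R]_(6 * d + 2) := \col_k (al * (- rd - qk nn k)).
Definition w3v : 'cV[R]_(6 * d + 2) := \col_k (ck nn k / al).
Definition pp : params R d (2 * K * d) (6 * d + 2) :=
  @Params R d _ _ W1m b1v W2m b2v w3v 0.

Definition tt (x : 'cV[R]_(d + d)) (k : 'I_d) : R := x1 x k 0 + x2 x k 0.
Definition T1 x (m : nat) : R := \sum_(k < d) ((k : nat) == (m %% d)%N)%:R * tt x k.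
Definition Fq x (m : nat) : R := relu (sg (m %/ d)%N * T1 x m - cj hh (m %/ d %/ 2)%N).
Definition Qp x : R := \sum_(m < 2 * K * d) Fq x m.

Lemma be_gt0 : 0 < be.
Proof. by rewrite /be sqrtr_gt0 divr_gt0 // ltr0n. Qed.
Lemma rd_gt0 : 0 < rd.
Proof. by rewrite /rd sqrtr_gt0 ltr0n. Qed.
Lemma al_gt0 : 0 < al.
Proof. by rewrite /al sqrtr_gt0 rd_gt0. Qed.

Lemma pre1E x (m : 'I_(2 * K * d)) :
  (W1m *m x + b1v) m 0 = be * (sg (m %/ d)%N * T1 x m - cj hh (m %/ d %/ 2)%N).
Proof.
have -> : W1m *m x = Amat *m x1 x + Amat *m x2 x.
  by rewrite /W1m -{1}(vsubmxK x) mul_row_col.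
rewrite !mxE /T1 /tt mulrBr mulr_sumr -big_split /=; congr (_ + _).
by rewrite mulr_sumr; apply: eq_bigr => k _; rewrite /Amat !mxE; ring.
Qed.

Lemma pre2E x (k : 'I_(6 * d + 2)) :
  (W2m *m reluv (W1m *m x + b1v) + b2v) k 0 = al * (rd * hh * Qp x - rd - qk nn k).
Proof.
set v := reluv _.
rewrite !mxE.
have -> : \sum_j W2m k j * v j 0 = \sum_(j < 2 * K * d) wv * be * Fq x j.
  apply: eq_bigr => j _.
  have -> : W2m k j = wv by rewrite /W2m mxE.
  have -> : v j 0 = relu ((W1m *m x + b1v) j 0) by rewrite /v /reluv [LHS]mxE.
  rewrite pre1E relu_scale ?ltW ?be_gt0 //.
  by rewrite /Fq mulrA.
have -> : \sum_(j < 2 * K * d) wv * be * Fq x j = al * rd * hh * Qp x.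
  by rewrite /Qp mulr_sumr /wv divfK ?gt_eqF ?be_gt0.
ring.
Qed.

Lemma netE x : net pp x = psi nn (rd * hh * Qp x - rd).
Proof.
rewrite /net /=.
set M := W2m *m _ + _.
rewrite addr0 !mxE.
rewrite -(psi_sum nn (6 * d + 2)%N (rd * hh * Qp x - rd)); last by rewrite /nn; lia.
apply: eq_bigr => k _.
have -> : reluv M k 0 = relu (M k 0) by rewrite /reluv mxE.
rewrite /M pre2E /w3v !mxE.
by rewrite relu_scale ?ltW ?al_gt0 // mulrA divfK // gt_eqF // al_gt0.
Qed.

Lemma QpE x : Qp x = \sum_(i < d) gp K hh (tt x i).
Proof.
rewrite /Qp (sum_mul (Fq x) (2 * K) d).
have E : forall (a : 'I_(2 * K)) (y : 'I_d),
    Fq x (a * d + y)%N = relu (sg a * tt x y - cj hh (a %/ 2)%N).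
  move=> a y; rewrite /Fq /T1.
  have h1 : ((a * d + y) %/ d = a)%N by rewrite divnMDl // divn_small // addn0.
  have h2 : ((a * d + y) %% d = y)%N by rewrite modnMDl modn_small.
  rewrite h1 h2 (bigD1 y) //= eqxx mul1r big1 ?addr0 // => k hk.
  have hk' : (k : nat) != y := hk.
  by rewrite (negbTE hk') mul0r.
under eq_bigr do under eq_bigr do rewrite E.
rewrite exchange_big /=; apply: eq_bigr => y _.
rewrite /gp.
move: (tt x y) => t.
rewrite [(2 * K)%N]mulnC.
rewrite (sum_mul (fun a => relu (sg a * t - cj hh (a %/ 2)%N)) K 2).
apply: eq_bigr => j _.
rewrite (big2 (fun s => relu (sg (j * 2 + s)%N * t - cj hh ((j * 2 + s) %/ 2)%N))).
have h3 : ((j * 2 + 0) %/ 2 = j)%N by lia.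
have h4 : ((j * 2 + 1) %/ 2 = j)%N by lia.
have h5 : ((j * 2 + 0) %% 2 = 0)%N by lia.
have h6 : ((j * 2 + 1) %% 2 = 1)%N by lia.
by rewrite h3 h4 /sg h5 h6 /= mul1r mulN1r.
Qed.

Lemma rd_ge1 : 1 <= rd.
Proof. by rewrite /rd -{1}sqrtr1; apply: ler_wsqrtr; rewrite ler1n. Qed.
Lemma rd2 : rd ^+ 2 = d%:R.
Proof. by rewrite /rd sqr_sqrtr // ler0n. Qed.
Lemma al2 : al ^+ 2 = rd.
Proof. by rewrite /al sqr_sqrtr // ltW // rd_gt0. Qed.
Lemma be2 : be ^+ 2 = d%:R / K%:R.
Proof. by rewrite /be sqr_sqrtr // divr_ge0 // ler0n. Qed.

Lemma rowW1 (m : 'I_(2 * K * d)) : \sum_(k < d + d) W1m m k ^+ 2 = 2 * be ^+ 2.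
Proof.
rewrite /W1m big_split_ord /=.
under eq_bigr do rewrite row_mxEl.
under [X in _ + X]eq_bigr do rewrite row_mxEr.
suff -> : \sum_(i < d) Amat m i ^+ 2 = be ^+ 2 by ring.
have hm : (m %% d < d)%N by rewrite ltn_pmod.
rewrite (bigD1 (Ordinal hm)) //= big1 ?addr0.
  rewrite /Amat mxE eqxx /= mulr1 exprMn.
  suff -> : sg (m %/ d) ^+ 2 = 1 by rewrite mulr1.
  by rewrite /sg; case: ifP => _; rewrite ?expr1n ?sqrrN ?expr1n.
move=> k hk; rewrite /Amat mxE.
have hk' : (k : nat) != (m %% d)%N := hk.
by rewrite (negbTE hk') mulr0 expr0n.
Qed.

Lemma cj_bound (m : 'I_(2 * K * d)) : (cj hh (m %/ d %/ 2)%N) ^+ 2 <= 4.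
Proof.
have hm : (m %/ d %/ 2 < K)%N.
  rewrite ltn_divLR // ltn_divLR //; have := ltn_ord m; lia.
have hk : 0 < K%:R :> R by rewrite ltr0n.
have hj : ((m %/ d %/ 2)%N + 1)%:R <= K%:R :> R by rewrite ler_nat addn1.
move: hj; rewrite natrD => hj.
set j := (m %/ d %/ 2)%N in hj *.
have j0 : 0 <= j%:R :> R by rewrite ler0n.
have c0 : 0 <= cj hh j by rewrite /cj /hh mulr_ge0 ?divr_ge0 ?ler0n // addr_ge0 // invr_ge0 ler0n.
have c2 : cj hh j <= 2.
  rewrite /cj /hh mulrA ler_pdivrMr //; lra.
nra.
Qed.

Lemma norm_bound : pnorm2 pp <= 1260 * rd ^+ 5.
Proof.
have hk : 0 < K%:R :> R by rewrite ltr0n.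
have hD : 0 < d%:R :> R by rewrite ltr0n.
have r1 := rd_ge1; have r0 := rd_gt0.
rewrite /pnorm2 /=.
have s1 : sqsum W1m = 4 * d%:R ^+ 2.
  rewrite /sqsum (eq_bigr (fun _ => 2 * be ^+ 2)); last by move=> m _; exact: rowW1.
  rewrite sumr_const card_ord -(mulr_natl (2 * be ^+ 2) (2 * K * d)) be2 !natrM; field; lra.
have s2 : sqsum b1v <= 8 * d%:R ^+ 2.
  apply: le_trans (@sqsum_le _ _ b1v (4 * be ^+ 2) _) _.
    move=> i j; rewrite mxE sqrrN exprMn mulrC ler_wpM2r ?sqr_ge0 //; exact: cj_bound.
  rewrite be2 muln1 !natrM; apply: eqle; field; lra.
have s3 : sqsum W2m <= 8 * d%:R * rd * (6 * d%:R + 2).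
  apply: le_trans (@sqsum_le _ _ W2m (wv ^+ 2) _) _.
    by move=> i j; rewrite mxE.
  rewrite /wv /hh !exprMn !exprVn al2 rd2 be2 !(natrM, natrD).
  apply: eqle; field; lra.
have s4 : sqsum b2v <= (6 * d%:R + 2) * (rd * (rd + 1) ^+ 2).
  apply: le_trans (@sqsum_le _ _ b2v (rd * (rd + 1) ^+ 2) _) _.
    move=> i j; rewrite mxE exprMn al2 ler_pM2l //.
    have := qk_bound nn i; rewrite ler_norml => /andP [q1 q2].
    have h1 : 0 <= 1 - qk nn i by lra.
    have h2 : 0 <= 2 * rd + 1 + qk nn i by lra.
    have := mulr_ge0 h1 h2.
    have -> : (- rd - qk nn i) ^+ 2 = (rd + 1) ^+ 2 - (1 - qk nn i) * (2 * rd + 1 + qk nn i) by ring.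
    lra.
  by rewrite muln1 natrD natrM.
have s5 : sqsum w3v <= (6 * d%:R + 2) * (144 * d%:R ^+ 2 / rd).
  apply: le_trans (@sqsum_le _ _ w3v (144 * d%:R ^+ 2 / rd) _) _.
    move=> i j; rewrite mxE expr_div_n al2 ler_pM2r ?invr_gt0 //.
    have := ck_bound nn i; rewrite /nn natrM => hc.
    have : `|ck nn i| ^+ 2 <= (4 * (3%:R * d%:R)) ^+ 2.
      by rewrite lerXn2r ?nnegrE ?normr_ge0 // mulr_ge0 // mulr_ge0 // ler0n.
    by rewrite real_normK ?num_real // => h; apply: le_trans h _; apply: eqle; ring.
  by rewrite muln1 natrD natrM.
rewrite -rd2 in s1 s2 s3 s4 s5.
have e5 : (6 * rd ^+ 2 + 2) * (144 * (rd ^+ 2) ^+ 2 / rd) = (6 * rd ^+ 2 + 2) * (144 * rd ^+ 3).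
  by congr (_ * _); field; lra.
rewrite e5 in s5.
have p2 : rd ^+ 2 <= rd ^+ 5 by apply: ler_weXn2l.
have p3 : rd ^+ 3 <= rd ^+ 5 by apply: ler_weXn2l.
have p4 : rd ^+ 4 <= rd ^+ 5 by apply: ler_weXn2l.
have p1 : rd <= rd ^+ 5 by apply: ler_eXnr.
rewrite expr0n /= addr0.
have -> : 1260 * rd ^+ 5 = 918 * rd ^+ 5 + 24 * rd ^+ 5 + 312 * rd ^+ 5 + 4 * rd ^+ 5 + 2 * rd ^+ 5 by ring.
have E : 4 * (rd ^+ 2) ^+ 2 + 8 * (rd ^+ 2) ^+ 2 + 8 * rd ^+ 2 * rd * (6 * rd ^+ 2 + 2)
   + (6 * rd ^+ 2 + 2) * (rd * (rd + 1) ^+ 2) + (6 * rd ^+ 2 + 2) * (144 * rd ^+ 3)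
   = 918 * rd ^+ 5 + 24 * rd ^+ 4 + 312 * rd ^+ 3 + 4 * rd ^+ 2 + 2 * rd by ring.
lra.
Qed.

Lemma err_bound x : Xd x -> `|f_target x - net pp x| <= 3 * (d%:R ^+ 2 * rd) / K%:R.
Proof.
case=> su sv.
have Hu := sphere1 su; have Hv := sphere1 sv.
set s := dotv (x1 x) (x2 x).
have hk1 : 1 <= K%:R :> R by rewrite ler1n.
have hk : 0 < K%:R :> R by lra.
have h0 : 0 < hh by rewrite /hh divr_gt0.
have r0 := rd_gt0.
have D0 : 0 <= d%:R :> R by rewrite ler0n.
have tb : forall i, `|tt x i| <= (K%:R + 2^-1) * hh.
  move=> i; have /sq_le1 /andP [? ?] := coord_le i Hu.
  have /sq_le1 /andP [? ?] := coord_le i Hv.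
  have -> : (K%:R + 2^-1) * hh = 2 + K%:R^-1 by rewrite /hh; field; lra.
  have : 0 < K%:R^-1 :> R by rewrite invr_gt0.
  rewrite /tt ler_norml => ?; apply/andP; split; lra.
have sumtt : \sum_(i < d) tt x i ^+ 2 = 2 + 2 * s.
  transitivity (dotv (x1 x) (x1 x) + dotv (x2 x) (x2 x) + 2 * s); last first.
    by rewrite Hu Hv; ring.
  rewrite /s /dotv /tt mulr_sumr -!big_split /=.
  by apply: eq_bigr => i _; ring.
rewrite netE QpE.
set Q := \sum_(i < d) gp K hh (tt x i).
have L := psi_lip R nn (rd * hh * Q - rd) (rd * s).
apply: le_trans L _.
have Ediff : rd * s - (rd * hh * Q - rd)
    = rd / 2 * \sum_(i < d) (tt x i ^+ 2 - 2 * hh * gp K hh (tt x i)).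
  by rewrite sumrB sumtt /Q -mulr_sumr; field.
have Eb : `|\sum_(i < d) (tt x i ^+ 2 - 2 * hh * gp K hh (tt x i))| <= d%:R * (hh ^+ 2 / 4).
  apply: le_trans (ler_norm_sum _ _ _) _.
  apply: (@le_trans _ _ (\sum_(i < d) (hh ^+ 2 / 4))).
    by apply: ler_sum => i _; apply: sq_err.
  by rewrite sumr_const card_ord mulr_natl.
have hh2 : hh ^+ 2 / 4 = K%:R^-1 * K%:R^-1 by rewrite /hh; field; lra.
rewrite hh2 in Eb.
set ik := K%:R^-1 in Eb hh2 *.
have ik0 : 0 < ik by rewrite /ik invr_gt0.
have ikk : K%:R * ik = 1 by rewrite /ik mulfV // gt_eqF.
have ik1 : ik <= 1 by nra.
have hr2 : 0 <= rd / 2 by rewrite divr_ge0 // ltW.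
rewrite Ediff normrM (ger0_norm hr2).
have n3 : nn%:R = 3 * d%:R :> R by rewrite /nn natrM.
rewrite n3.
set A := `|_| in Eb *.
have A0 : 0 <= A by rewrite /A normr_ge0.
have step : 2 * (3 * d%:R) * (rd / 2 * A) <= 3 * (d%:R ^+ 2 * rd) * (ik * ik).
  have -> : 2 * (3 * d%:R) * (rd / 2 * A) = 3 * d%:R * rd * A by field.
  have -> : 3 * (d%:R ^+ 2 * rd) * (ik * ik) = 3 * d%:R * rd * (d%:R * (ik * ik)) by ring.
  by apply: ler_wpM2l => //; rewrite !mulr_ge0 // ltW.
apply: le_trans step _.
apply: ler_wpM2l; last by nra.
by rewrite !mulr_ge0 // ?exprn_ge0 // ltW.
Qed.

End Construction.
End Net.


Theorem lemma14 (R : realType) :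
  exists C1 C2 : R,
  forall d K : nat, (2 <= d)%N -> (1 <= K)%N ->
  let omega := maxn (6 * d + 2) (2 * K * d) in
  exists (m1 m2 : nat) (p : params R d m1 m2),
    [/\ (m1 <= omega)%N, (m2 <= omega)%N,
        (@Linf_norm R d (fun x => (f_target x - net p x)%R)
           <= (C1 * (d%:R ^+ 2 * Num.sqrt d%:R) / K%:R)%:E)%E &
        (@R3 R d (net p) omega <= (C2 * (d%:R ^+ 2 * Num.sqrt d%:R))%:E)%E].
Proof.
exists 3, 420 => d K hd hK omega.
have d0 : (0 < d)%N by lia.
exists (2 * K * d)%N, (6 * d + 2)%N, (pp R d K).
split.
- by rewrite /omega leq_maxr.
- by rewrite /omega leq_maxl.
- apply: ge_ereal_sup => _ [x Xx <-]; rewrite lee_fin.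
  exact: (err_bound R d K d0 hK x Xx).
- have H : (R3 (net (pp R d K)) omega <= (pnorm2 (pp R d K) / 3)%:E)%E.
    apply: ereal_inf_lbound.
    exists (2 * K * d)%N, (6 * d + 2)%N, (pp R d K); split => //.
    + by rewrite /omega leq_maxr.
    + by rewrite /omega leq_maxl.
  apply: le_trans H _; rewrite lee_fin.
  have NB := norm_bound R d K d0 hK.
  have -> : d%:R ^+ 2 * Num.sqrt d%:R = rd R d ^+ 5.
    have -> : Num.sqrt d%:R = rd R d by [].
    by rewrite -(rd2 R d); ring.
  lra.
Qed.
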